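(* Let $b\ge 2$ with $b\not\equiv 1\pmod 3$, and let $n\ge 2$. Then $$g(T_{b'}(n)) = 3b + \frac{b^{2n}(b^3+b^2-b-1) + b^{n}\{b^2(n+1)-(n+3)\}}{2}.$$
   Context: For integers $b\ge2$ with $b\not\equiv1\pmod3$, $n\ge0$, $i\ge0$ put $s'_i=(b+1)b^{n+i}+1$, and $T_{b'}(n)=\langle\{s'_i:i\in\mathbb{N}\}\rangle$ (submonoid of $(\mathbb{N},+)$ generated by them, a numerical semigroup). The genus $g(S)$ is the cardinality of $\mathbb{N}\setminus S$. *)

(* Defs.v *)
From mathcomp Require Import all_boot.
Set Implicit Arguments. Unset Strict Implicit. Unset Printing Implicit Defensive.

Inductive in_monoid (A : nat -> Prop) : nat -> Prop :=
| in_monoid0 : in_monoid A 0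
| in_monoid_add : forall a x, A a -> in_monoid A x -> in_monoid A (a + x).

Definition sgen (b n i : nat) : nat := (b + 1) * b ^ (n + i) + 1.

Definition Tb' (b n : nat) : nat -> Prop :=
  in_monoid (fun a => exists i, a = sgen b n i).

Definition has_genus (S : nat -> Prop) (g : nat) : Prop :=
  exists s : seq nat, uniq s /\ (forall x, x \in s <-> ~ S x) /\ size s = g.

(* Main.v *)
Require Import Defs.
From mathcomp Require Import all_boot zify.
Set Implicit Arguments. Unset Strict Implicit.
Set Warnings "-notation-overridden".


Fixpoint sumf (F : nat -> nat) (n : nat) : nat :=
  if n is n'.+1 then sumf F n' + F n' else 0.

Lemma sumf_ext F G n : (forall i, i < n -> F i = G i) -> sumf F n = sumf G n.
Proof. elim: n => [|n IH] H //=; rewrite IH ?H //; move=> i Hi; apply: H; lia. Qed.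

Lemma sumf_add F G n : sumf (fun i => F i + G i) n = sumf F n + sumf G n.
Proof. elim: n => [|n IH] /=; [lia|rewrite IH; lia]. Qed.

Lemma sumf_split F m n : sumf F (m + n) = sumf F m + sumf (fun i => F (m + i)) n.
Proof. elim: n => [|n IH]; first by rewrite /= !addn0.
rewrite addnS /= IH; lia. Qed.

Lemma sumf_mull k F n : sumf (fun i => k * F i) n = k * sumf F n.
Proof. elim: n => [|n IH] /=; [lia|rewrite IH; lia]. Qed.

Lemma sumf_const k n : sumf (fun _ => k) n = k * n.
Proof. elim: n => [|n IH] /=; [lia|rewrite IH; lia]. Qed.

Lemma sumf_swap (F : nat -> nat -> nat) n m :
  sumf (fun i => sumf (fun j => F i j) m) n = sumf (fun j => sumf (fun i => F i j) n) m.
Proof. elim: n => [|n IH] /=. by elim: m => //= m <-.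
rewrite IH -sumf_add; done. Qed.

Lemma sumf_block F m N : sumf F (m * N) = sumf (fun a => sumf (fun e => F (m * a + e)) m) N.
Proof. elim: N => [|N IH]; first by rewrite muln0.
by rewrite mulnS addnC sumf_split IH /=. Qed.

Lemma sumf_le F G n : (forall i, i < n -> F i <= G i) -> sumf F n <= sumf G n.
Proof. elim: n => [|n IH] H //=; apply: leq_add; [apply: IH => i Hi|]; apply: H; lia. Qed.

Lemma sumf_sub F G n : (forall i, i < n -> G i <= F i) ->
  sumf (fun i => F i - G i) n + sumf G n = sumf F n.
Proof. elim: n => [|n IH] H //=. have := H n (ltnSn n). have := IH (fun i Hi => H i (ltnW Hi)). lia. Qed.

Lemma sumf_id n : 2 * sumf id n = n * n.-1.
Proof. elim: n => [|n IH] /=; [lia|]. rewrite mulnDr IH; case: n {IH} => //= n; lia. Qed.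

Lemma sumf_zero F n : (forall i, i < n -> F i = 0) -> sumf F n = 0.
Proof. move=> H; rewrite (sumf_ext (G := fun _ => 0)) // sumf_const; lia. Qed.

Lemma sumf_window G rho K N : rho + K <= N ->
  sumf (fun a => if (rho <= a) && (a < rho + K) then G (a - rho) else 0) N = sumf G K.
Proof.
move=> H; rewrite -(subnKC H) !sumf_split.
rewrite sumf_zero; last by move=> i Hi; case: ifP => //; lia.
rewrite (sumf_ext (G := G)); last by move=> i Hi; case: ifP => //; [move=>_; congr G; lia| lia].
rewrite [sumf _ (N - _)]sumf_zero; last by move=> i Hi; case: ifP => //; lia.
lia. Qed.

Lemma sumf_lt m Z : m <= Z -> sumf (fun a => nat_of_bool (a < m)) Z = m.
Proof.
move=> H; rewrite -(subnKC H) sumf_split (@sumf_ext (fun a => nat_of_bool (a < m)) (fun _ => 1) m); last by move=> i Hi; rewrite Hi.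
rewrite sumf_const (@sumf_zero (fun i => nat_of_bool (m + i < m))); last by move=> i _; rewrite ltnNge leq_addr. lia. Qed.

Lemma sumf_range lo hi N :
  sumf (fun j => nat_of_bool ((lo < j) && (j <= hi))) N.+1 = minn N hi - lo.
Proof.
elim: N => [|N IH].
  by rewrite /=; have [h1|h1] := ltnP lo 0; have [h2|h2] := leqP 0 hi; rewrite /=; lia.
rewrite /= in IH *. rewrite IH.
have [h1|h1] := ltnP lo N.+1; have [h2|h2] := leqP N.+1 hi; rewrite /=; lia. Qed.

Lemma count_iota (p : pred nat) B : count p (iota 0 B) = sumf p B.
Proof. elim: B => [|B IH] //. rewrite -[B.+1]addn1 iotaD count_cat IH /= add0n addn0 addn1 //. Qed.

Lemma sumf_big F n : sumf F n = \sum_(i < n) F i.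
Proof. elim: n => [|n IH]; first by rewrite big_ord0. by rewrite big_ord_recr /= IH. Qed.

Lemma sumf_perm f n : (forall i, i < n -> f i < n) ->
  (forall i j, i < n -> j < n -> f i = f j -> i = j) -> sumf f n = sumf id n.
Proof.
move=> Hr Hi; rewrite !sumf_big.
pose h := fun i : 'I_n => Ordinal (Hr i (ltn_ord i)).
have hinj : injective h.
  move=> i j /(congr1 val) /= E; apply: val_inj; apply: Hi => //; exact: ltn_ord.
by rewrite [RHS](reindex_inj hinj). Qed.


Fixpoint wfuel (b f q : nat) : nat :=
  if f is f'.+1 then q %/ b + wfuel b f' (q %/ b) else 0.
Definition w b q := wfuel b q q.

Lemma wfuel0 b f : wfuel b f 0 = 0.
Proof. by elim: f => //= f IH; rewrite div0n IH. Qed.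

Lemma wfuel_eq b f1 f2 q : 1 < b -> q <= f1 -> q <= f2 -> wfuel b f1 q = wfuel b f2 q.
Proof.
move=> hb; elim: f1 f2 q => [|f1 IH] f2 q h1 h2.
  have -> : q = 0 by lia.
  by rewrite !wfuel0.
case: (posnP q) => [->|qp]; first by rewrite !wfuel0.
case: f2 h2 => [|f2] h2; first lia.
rewrite /=; congr (_ + _); apply: IH; have := ltn_Pdiv hb qp; lia.
Qed.

Lemma wE b q : 1 < b -> w b q = q %/ b + w b (q %/ b).
Proof.
move=> hb; case: q => [|q]; first by rewrite /w /= div0n.
rewrite /w /=; congr (_ + _); apply: wfuel_eq => //.
have := ltn_Pdiv hb (ltn0Sn q); lia.
Qed.

Lemma w0 b : w b 0 = 0.
Proof. by []. Qed.

Lemma w_small b q : q < b -> w b q = 0.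
Proof.
move=> hq; have hb : 0 < b by lia.
case: q hq => [|q] hq //. rewrite /w /= divn_small // wfuel0. done.
Qed.

Lemma w_ge_div b q : 1 < b -> q %/ b <= w b q.
Proof. move=> hb; rewrite (wE q hb); lia. Qed.

Lemma w_le b q : 1 < b -> (b - 1) * w b q <= q.
Proof.
move=> hb; elim/ltn_ind: q => q IH.
case: (posnP q) => [->|qp]; first by rewrite w0 muln0.
rewrite (wE q hb) mulnDr.
have h1 := IH _ (ltn_Pdiv hb qp).
have h2 := divn_eq q b. have h3 : (q %/ b) * b = (b - 1) * (q %/ b) + q %/ b.
  rewrite mulnC; case: b hb {IH h1 h2} => // b _; rewrite subn1 /= mulSn; lia.
lia.
Qed.

Lemma w_mono b q1 q2 : 1 < b -> q1 <= q2 -> w b q1 <= w b q2.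
Proof.
move=> hb; elim/ltn_ind: q2 q1 => q2 IH q1 h.
case: (posnP q1) => [->|qp]; first by rewrite w0.
rewrite (wE q1 hb) (wE q2 hb). apply: leq_add; first exact: leq_div2r.
apply: IH; last exact: leq_div2r.
apply: ltn_Pdiv => //; lia.
Qed.

Lemma w_super b x y : 1 < b -> w b x + w b y <= w b (x + y).
Proof.
move=> hb; elim/ltn_ind: (x + y) {-2}x {-2}y (erefl (x + y)) => s IH x' y' hs.
case: (posnP s) => [sp|sp].
  have -> : x' = 0 by lia.
  have -> : y' = 0 by lia.
  by rewrite w0.
rewrite (wE x' hb) (wE y' hb) (wE (x' + y') hb) divnD; last lia.
have hxy : x' %/ b + y' %/ b < s.
  rewrite -hs. have := leq_div x' b. have := leq_div y' b.
  case: (posnP x') => [x0|xp]; first by rewrite x0 div0n !add0n => _ _; apply: ltn_Pdiv => //; lia.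
  have := ltn_Pdiv hb xp; lia.
have := IH _ hxy (x' %/ b) (y' %/ b) erefl.
have := @w_mono b (x' %/ b + y' %/ b) (x' %/ b + y' %/ b + (b <= x' %% b + y' %% b)) hb (leq_addr _ _).
lia.
Qed.

Lemma w_pow b j : 1 < b -> (b - 1) * w b (b ^ j) + 1 = b ^ j.
Proof.
move=> hb; elim: j => [|j IH]; first by rewrite expn0 (@w_small b 1) // muln0.
rewrite (wE _ hb) expnS mulKn; last lia.
rewrite mulnDr -addnA IH. case: b hb {IH} => // b _; rewrite subn1 /= mulSn; lia.
Qed.

Lemma w_digits b K q : 1 < b -> q < b ^ K -> q <= (b - 1) * w b q + (b - 1) * K.
Proof.
move=> hb; elim: K q => [|K IH] q hq.
  by rewrite expn0 in hq; have -> : q = 0 by lia.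
have h1 : q %/ b < b ^ K by rewrite ltn_divLR -?expnSr //; lia.
have := IH _ h1. rewrite (wE q hb).
have h2 := divn_eq q b. have h3 : q %% b < b by rewrite ltn_pmod //; lia.
move: (q %/ b) (w b (q %/ b)) (q %% b) h2 h3 => X Y R.
have -> : b = (b - 1).+1 by lia.
move: (b - 1) => d. rewrite !subn1 /=. lia.
Qed.

Lemma w_shift b K x y : 1 < b -> y < b ^ K ->
  (b - 1) * w b (x * b ^ K + y) + x = (b - 1) * w b x + x * b ^ K + (b - 1) * w b y.
Proof.
move=> hb; elim: K y => [|K IH] y hy.
  rewrite expn0 in hy; have -> : y = 0 by lia. rewrite muln1 addn0 w0; lia.
have h1 : y %/ b < b ^ K by rewrite ltn_divLR -?expnSr //; lia.
have e1 : (x * b ^ K.+1 + y) %/ b = x * b ^ K + y %/ b.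
  rewrite expnSr mulnA divnMDl //; lia.
rewrite (wE _ hb) e1 (wE y hb).
have := IH _ h1. rewrite expnS.
move: (w b (x * b ^ K + y %/ b)) (w b x) (w b (y %/ b)) (b ^ K) (y %/ b) => A B C P Q.
have -> : b = (b - 1).+1 by lia.
move: (b - 1) => d. rewrite !subn1 /=.
move: (w d.+1 (x * P + Q)) (w d.+1 Q) => U V. lia.
Qed.


Definition sumb (b : nat) (l : seq nat) : nat := foldr (fun i acc => b ^ i + acc) 0 l.

Lemma sumb_cat b l1 l2 : sumb b (l1 ++ l2) = sumb b l1 + sumb b l2.
Proof. by elim: l1 => //= i l ->; rewrite addnA. Qed.

Lemma sumb_nseq b m e : sumb b (nseq m e) = m * b ^ e.
Proof. elim: m => [|m IH] /=; [lia| rewrite IH; lia]. Qed.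

Lemma sumb_mapS b l : sumb b (map S l) = b * sumb b l.
Proof. elim: l => [|i l IH] /=; [lia| rewrite IH expnS; lia]. Qed.

Lemma pow_mod b i : 1 < b -> b ^ i = 1 %[mod b - 1].
Proof.
move=> hb; have h : b %% (b - 1) = 1 %% (b - 1).
  rewrite {1}(_ : b = 1 + (b - 1)); last lia. by rewrite modnDr.
by rewrite -modnXm h modnXm exp1n.
Qed.

Lemma Pchar1 b l : 1 < b ->
  size l <= sumb b l /\ size l = sumb b l %[mod b - 1] /\
  sumb b l <= size l + (b - 1) * w b (sumb b l).
Proof.
move=> hb; elim: l => [|i l [IH1 [IH2 IH3]]] /=; first by rewrite w0; lia.
have p1 : 0 < b ^ i by rewrite expn_gt0; lia.
split; first lia.
split.
  rewrite -add1n -modnDm -[in RHS]modnDm IH2 pow_mod // !modnDm; done.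
have h1 := w_super (b ^ i) (sumb b l) hb.
have h2 := w_pow i hb.
have h3 := leq_mul (leqnn (b - 1)) h1.
rewrite mulnDr in h3. lia.
Qed.

Lemma mulb b x : 1 < b -> x * b = (b - 1) * x + x.
Proof. move=> hb; rewrite mulnC -{1}(subnK (ltnW hb)) mulnDl mul1n addnC. by rewrite subn1. Qed.

Lemma Pchar2 b k M : 1 < b -> k <= M -> k = M %[mod b - 1] ->
  M <= k + (b - 1) * w b M -> exists l, size l = k /\ sumb b l = M.
Proof.
move=> hb; elim/ltn_ind: M k => M IH k h1 h2 h3.
case: (ltnP M b) => hMb.
  rewrite w_small // muln0 addn0 in h3.
  exists (nseq M 0); rewrite size_nseq sumb_nseq expn0 muln1; split => //; lia.
have eM := divn_eq M b. have he : M %% b < b by rewrite ltn_pmod //; lia.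
have wM := wE M hb. have wl := w_le (M %/ b) hb.
move: (M %/ b) (M %% b) eM he wM wl => M' e eM he wM wl.
have Mpos : 0 < M' by case: (posnP M') eM => [->|//]; rewrite mul0n add0n; lia.
have mb := mulb M' hb. have mb2 := mulb k hb.
rewrite wM mulnDr in h3.
have ek : e <= k by clear -h3 eM mb wl; lia.
case: (leqP k (M' + e)) => hk.
- have hM' : M' < M.
    have : M' <= (b - 1) * M' by rewrite leq_pmull; lia.
    clear -eM mb Mpos; lia.
  have c1 : k - e = M' %[mod b - 1].
    apply/eqP; rewrite -(eqn_modDr e) subnK //; apply/eqP.
    rewrite h2 eM -modnDm -modnMm.
    have -> : b %% (b - 1) = 1 %% (b - 1) by rewrite -{1}(expn1 b) pow_mod.
    by rewrite modnMm muln1 modnDm.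
  have c2 : M' <= k - e + (b - 1) * w b M' by clear -h3 eM mb ek; lia.
  have [l' [s1 s2]] := IH M' hM' (k - e) ltac:(clear -hk; lia) c1 c2.
  exists (nseq e 0 ++ map S l'); rewrite size_cat size_nseq size_map s1 sumb_cat sumb_nseq sumb_mapS s2.
  split; [clear -ek; lia| rewrite eM expn0; clear -mb; lia].
- have hd : (b - 1) %| M - k by rewrite -eqn_mod_dvd // eq_sym h2.
  move: hd => /dvdnP [N eN].
  have hN : N <= k.
    have : M <= k * b.
      have := leq_mul hk (leqnn b). rewrite mulSn !mulnDl.
      have : e <= e * b by rewrite leq_pmulr; lia.
      clear -eM; lia.
    rewrite mb2 => hh. have : N * (b - 1) <= k * (b - 1) by clear -hh eN h1; lia.
    rewrite leq_pmul2r; lia.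
  exists (nseq (k - N) 0 ++ nseq N 1); rewrite size_cat !size_nseq sumb_cat !sumb_nseq expn0 expn1.
  split; first by clear -hN; lia.
  rewrite (mulb N hb); clear -eN h1 hN; lia.
Qed.


Lemma Tb_char b n x : Tb' b n x <-> exists l, x = size l + (b + 1) * b ^ n * sumb b l.
Proof.
split.
- rewrite /Tb'; elim => [|a x' [i ->] _ [l ->]]; first by exists [::]; rewrite /= muln0.
  exists (i :: l); rewrite /sgen /= expnD. rewrite !mulnDr mulnA. lia.
- rewrite /Tb'; move=> [l ->]; elim: l => [|i l IH] /=; first by rewrite muln0; constructor.
  have -> : (size l).+1 + (b + 1) * b ^ n * (b ^ i + sumb b l)
    = sgen b n i + (size l + (b + 1) * b ^ n * sumb b l).
    rewrite /sgen expnD !mulnDr mulnA; lia.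
  apply: in_monoid_add => //; by exists i.
Qed.

Definition i3 d := if d %% 3 == 2 then d %/ 3 + 1 else 2 * (d %/ 3) + 1.

Lemma i3P d : d %% 3 != 0 -> 3 * i3 d = 1 %[mod d].
Proof.
move=> h; rewrite /i3; have := divn_eq d 3; have := ltn_pmod d (isT : 0 < 3).
case: ifP => /eqP e.
- move=> _ ed. have -> : 3 * (d %/ 3 + 1) = 1 + d by lia. by rewrite modnDr.
- move=> _ ed. have -> : 3 * (2 * (d %/ 3) + 1) = 2 * d + 1 by lia. by rewrite modnMDl.
Qed.

Definition tau b r q :=
  let d := b - 1 in let v := ((q + (d - 1) * r) * i3 d) %% d in if v == 0 then d else v.

Lemma tau_bounds b r q : 1 < b -> 1 <= tau b r q <= b - 1.
Proof.
move=> hb; rewrite /tau; case: eqP => [_|h]; first lia.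
have := ltn_pmod ((q + (b - 1 - 1) * r) * i3 (b - 1)) (_ : 0 < b - 1); lia.
Qed.

Lemma tau_mod3 b r q : 1 < b -> (b - 1) %% 3 != 0 -> 3 * tau b r q = q + (b - 2) * r %[mod b - 1].
Proof.
move=> hb h3; rewrite /tau. set d := b - 1. have -> : b - 2 = d - 1 by rewrite /d; lia.
set v := (_ * i3 d) %% d.
have -> : 3 * (if v == 0 then d else v) = 3 * v %[mod d].
  case: eqP => [->|_] //. by rewrite muln0 mod0n modnMl.
rewrite /v -modnMm modn_mod modnMm mulnCA -modnMm i3P // modnMm muln1 //.
Qed.

Lemma tau_mod b r q : 1 < b -> (b - 1) %% 3 != 0 -> r + 3 * tau b r q = q %[mod b - 1].
Proof.
move=> hb h3; rewrite -modnDm tau_mod3 // modnDm.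
have -> : r + (q + (b - 2) * r) = r * (b - 1) + q by rewrite mulnC; case: b hb {h3} => // [[//|b]] _; rewrite subn1 /= subn2 /=; lia.
by rewrite modnMDl.
Qed.

Lemma mod_inj_1d x y d : 1 <= x <= d -> 1 <= y <= d -> x %% d = y %% d -> x = y.
Proof.
move=> hx hy; case: (ltnP x d) => h1; case: (ltnP y d) => h2.
- by rewrite !modn_small.
- have -> : y = d by lia. rewrite modnn modn_small //; lia.
- have -> : x = d by lia. rewrite modnn modn_small //; lia.
- lia.
Qed.

Lemma cancel3 d x y : d %% 3 != 0 -> 3 * x = 3 * y %[mod d] -> x = y %[mod d].
Proof.
move=> h3 e.
have hx : forall z, z %% d = (3 * z * i3 d) %% d.
  move=> z; rewrite -[in LHS](muln1 z) -modnMmr -(i3P h3) modnMmr. congr (_ %% _); lia.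
by rewrite hx (hx y) -modnMml e modnMml.
Qed.

Lemma tau_uniq b r q t : 1 < b -> (b - 1) %% 3 != 0 -> 1 <= t <= b - 1 ->
  r + 3 * t = q %[mod b - 1] -> t = tau b r q.
Proof.
move=> hb h3 ht e.
have e2 : 3 * t = 3 * tau b r q %[mod b - 1].
  apply/eqP; rewrite -(eqn_modDl r) e tau_mod //.
apply: mod_inj_1d ht (tau_bounds r q hb) (cancel3 h3 e2).
Qed.

Definition cc b n := (b + 1) * b ^ n.

Lemma cmod b n : 1 < b -> cc b n + 1 = 3 %[mod b - 1].
Proof.
move=> hb; rewrite /cc -modnDml -modnMmr pow_mod // modnMmr muln1 modnDml.
have -> : b + 1 + 1 = 3 + (b - 1) by lia. by rewrite modnDr.
Qed.

Lemma tau_period b r a e : 1 < b -> (b - 1) %% 3 != 0 -> tau b r ((b - 1) * a + e) = tau b r e.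
Proof.
move=> hb h3; symmetry; apply: tau_uniq => //; first exact: tau_bounds.
by rewrite tau_mod // mulnC modnMDl.
Qed.

Lemma modD_congr a a' x y d : a = a' %[mod d] -> x = y %[mod d] -> a + x = a' + y %[mod d].
Proof. by move=> H1 H2; rewrite -modnDm H1 H2 modnDm. Qed.

Lemma modM_congr m x y d : x = y %[mod d] -> m * x = m * y %[mod d].
Proof. by move=> H; rewrite -modnMmr H modnMmr. Qed.

Lemma bn_ge b n : 1 < b -> 0 < n -> b * n <= b ^ n.
Proof.
move=> hb; elim: n => [|n IH] // _. case: n IH => [|n] IH; first by rewrite expn1 muln1.
have e1 : n.+2 <= b * n.+1 by have := leq_mul hb (leqnn n.+1); lia.
rewrite expnS; apply: leq_trans (leq_mul (leqnn b) e1) _; exact: leq_mul (leqnn b) (IH isT).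
Qed.

Lemma facts b n : 1 < b -> 1 < n ->
  [/\ 0 < cc b n, (cc b n + 1) * b <= b ^ (n + 3) & (b - 1) * (n + 3) <= cc b n].
Proof.
move=> hb hn; rewrite /cc. have h1 := bn_ge hb (ltnW hn).
have h2 : 0 < b ^ n by rewrite expn_gt0; lia.
split.
- nia.
- rewrite expnD. have -> : b ^ 3 = b * b * b by rewrite !expnS expn0; lia. nia.
- nia.
Qed.

Definition a0 b r q := [&& r <= q, q %% (b - 1) == r %% (b - 1) & q <= r + (b - 1) * w b q].
Definition a1 b n r q := r + (cc b n + 1) * tau b r q <= q.

Lemma mem_char b n r q : 1 < b -> 1 < n -> (b - 1) %% 3 != 0 -> r < cc b n ->
  Tb' b n (r + cc b n * q) <-> a0 b r q || a1 b n r q.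
Proof.
move=> hb hn h3 hr; have [c0 cB cD] := facts hb hn.
have cm := cmod n hb.
split.
- move=> /Tb_char [l E]. have [p1 [p2 p3]] := Pchar1 l hb.
  move: (size l) (sumb b l) E p1 p2 p3 => k M E p1 p2 p3.
  rewrite -/(cc b n) in E.
  have hk := divn_eq k (cc b n).
  have rk : r = k %% cc b n.
    have : (r + cc b n * q) %% cc b n = (k + cc b n * M) %% cc b n by rewrite E.
    by rewrite [r + _]addnC [k + _]addnC !(mulnC (cc b n)) !modnMDl (modn_small hr).
  rewrite -rk in hk.
  move: (k %/ cc b n) hk => t hk.
  have hq : q = t + M.
    have : cc b n * q = cc b n * (t + M) by rewrite mulnDr; clear -E hk; lia.
    by move/eqP; rewrite eqn_pmul2l // => /eqP.
  case: (posnP t) => [t0|tp].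
  + apply/orP; left. rewrite t0 mul0n add0n in hk. subst k.
    by rewrite hq t0 add0n /a0 p1 p3 -p2 eqxx.
  + apply/orP; right.
    set t0 := (t - 1) %% (b - 1) + 1.
    have bt0 : 1 <= t0 <= b - 1.
      have : 0 < b - 1 by clear -hb; lia.
      move=> /(ltn_pmod (t - 1)); rewrite /t0. move: ((t - 1) %% (b - 1)) => z. clear -hb; lia.
    have t0t : t0 <= t.
      have := leq_mod (t - 1) (b - 1); rewrite /t0. move: ((t - 1) %% (b - 1)) => z. clear -tp; lia.
    have mt0 : t0 = t %[mod b - 1].
      rewrite /t0 modnDml; congr (_ %% _); clear -tp; lia.
    have e1 : r + 3 * t0 = q %[mod b - 1].
      rewrite (modD_congr (erefl (r %% (b - 1))) (modM_congr 3 mt0)).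
      rewrite [3 * t]mulnC -(modD_congr (erefl (r %% (b - 1))) (modM_congr t cm)).
      have -> : r + t * (cc b n + 1) = k + t by rewrite hk; clear; lia.
      rewrite hq [t + M]addnC. apply: modD_congr => //.
    rewrite /a1 -(tau_uniq hb h3 bt0 e1).
    have := leq_mul (leqnn (cc b n + 1)) t0t. rewrite mulnDr in hk *. clear -hk hq p1. nia.
- case/orP.
  + move/and3P => [h1 /eqP h2 h3'].
    have [l [s1 s2]] := Pchar2 hb h1 (esym h2) h3'.
    apply/Tb_char; exists l; rewrite s1 s2 //.
  + rewrite /a1 => ha.
    set tt := tau b r q in ha. have btt := tau_bounds r q hb. rewrite -/tt in btt.
    set X := q - (r + (cc b n + 1) * tt).
    set m := (cc b n + 1) * (b - 1).
    have m0 : 0 < m by rewrite /m muln_gt0 addn1 /=; clear -hb; lia.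
    have hX := divn_eq X m. have hR := ltn_pmod X m0.
    move: (X %/ m) (X %% m) hX hR => u R hX hR.
    set t := tt + (b - 1) * u.
    have hq : q = r + (cc b n + 1) * t + R.
      rewrite /t mulnDr. rewrite /X in hX. rewrite /m in hX. clear -hX ha. nia.
    have kM : r + cc b n * t <= q - t by clear -hq; nia.
    have cong : r + cc b n * t = q - t %[mod b - 1].
      apply/eqP; rewrite -(eqn_modDr t) subnK; last by clear -hq; nia.
      have -> : r + cc b n * t + t = ((cc b n + 1) * u) * (b - 1) + (r + tt * (cc b n + 1)).
        rewrite /t; clear; nia.
      rewrite modnMDl; apply/eqP.
      rewrite (modD_congr (erefl (r %% (b - 1))) (modM_congr tt cm)) mulnC; exact: tau_mod.
    have eM : q - t = r + cc b n * t + R by clear -hq; nia.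
    have tq : t <= q by clear -hq; nia.
    have t1 : 0 < t by rewrite /t; case/andP: btt => bt1 _; by rewrite addn_gt0 bt1.
    have ct := leq_pmulr (cc b n) t1.
    have wc : q - t <= r + cc b n * t + (b - 1) * w b (q - t).
      case: (leqP ((cc b n + 1) * b) (q - t)) => hM.
      - have h1 : cc b n + 1 <= w b (q - t).
          apply: leq_trans (w_ge_div _ hb). by rewrite leq_divRL //; clear -hb; lia.
        have := leq_mul (leqnn (b - 1)) h1. rewrite /m in hR.
        move: (w b (q - t)) => W. clear -hR eM. nia.
      - have h2 := w_digits hb (leq_trans hM cB).
        move: (w b (q - t)) h2 => W h2. clear -h2 cD ct. lia.
    have [l [s1 s2]] := Pchar2 hb kM cong wc.
    apply/Tb_char; exists l; rewrite s1 s2 -/(cc b n).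
    rewrite -addnA -mulnDr subnKC //.
Qed.


Lemma sum_tau b r : 1 < b -> (b - 1) %% 3 != 0 ->
  sumf (fun e => tau b r e) (b - 1) = sumf id (b - 1) + (b - 1).
Proof.
move=> hb h3.
rewrite (@sumf_ext _ (fun e => (tau b r e - 1) + 1)); last first.
  move=> i _; have := tau_bounds r i hb; lia.
rewrite sumf_add sumf_const mul1n; congr (_ + _).
apply: sumf_perm.
- move=> i _; have := tau_bounds r i hb; lia.
- move=> i j hi hj e.
  have e' : tau b r i = tau b r j by have := tau_bounds r i hb; have := tau_bounds r j hb; lia.
  have := tau_mod r i hb h3; have := tau_mod r j hb h3. rewrite e' => -> .
  by rewrite !modn_small.
Qed.

Lemma cnt_a1 b n r : 1 < b -> 1 < n -> (b - 1) %% 3 != 0 -> r < cc b n ->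
  2 * sumf (fun q => ~~ a1 b n r q) ((b - 1) * (2 * (cc b n + 1))) = 2 * r + cc b n * b + 2.
Proof.
move=> hb hn h3 hr; have [c0 cB cD] := facts hb hn.
rewrite sumf_block sumf_swap.
set me := fun e => (r + (cc b n + 1) * tau b r e - e) %/ (b - 1).
have hme : forall e, e < b - 1 ->
    sumf (fun a => ~~ a1 b n r ((b - 1) * a + e)) (2 * (cc b n + 1)) = me e
    /\ (b - 1) * me e + e = r + (cc b n + 1) * tau b r e.
  move=> e he.
  have tb := tau_bounds r e hb.
  have L1 : e <= r + (cc b n + 1) * tau b r e.
    have : cc b n + 1 <= (cc b n + 1) * tau b r e by rewrite leq_pmulr //; case/andP: tb.
    have : b + 1 <= cc b n by rewrite /cc leq_pmulr // expn_gt0; lia.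
    clear -he; lia.
  have L2 : (b - 1) %| r + (cc b n + 1) * tau b r e - e.
    rewrite -eqn_mod_dvd //. apply/eqP.
    rewrite -(tau_mod r e hb h3) mulnC [3 * _]mulnC. apply: modD_congr => //. exact: modM_congr (cmod n hb).
  move: L2 => /dvdnP [k ek].
  have mek : me e = k by rewrite /me ek mulnK //; lia.
  rewrite mek.
  have ek2 : (b - 1) * k + e = r + (cc b n + 1) * tau b r e by clear -ek L1; lia.
  split => //.
  rewrite (@sumf_ext _ (fun a => nat_of_bool (a < k))); last first.
    move=> a _. rewrite /a1 tau_period // -ltnNge -ek2 [_ * k]mulnC [_ * a]mulnC ltn_add2r ltn_pmul2r //. lia.
  apply: sumf_lt.
  have : (b - 1) * k <= (b - 1) * (2 * (cc b n + 1)).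
    have : tau b r e <= b - 1 by case/andP: tb.
    move/(leq_mul (leqnn (cc b n + 1))). clear -ek2 hr hb. nia.
  rewrite leq_pmul2l //; lia.
rewrite (@sumf_ext _ me); last by move=> e he; case: (hme e he).
have key0 : sumf (fun e => (b - 1) * me e + e) (b - 1) = sumf (fun e => r + (cc b n + 1) * tau b r e) (b - 1).
  apply: sumf_ext => e he. by case: (hme e he).
have key : (b - 1) * sumf me (b - 1) + sumf id (b - 1) = r * (b - 1) + (cc b n + 1) * (sumf id (b - 1) + (b - 1)).
  by rewrite -(sum_tau r hb h3) -sumf_mull -sumf_mull -sumf_const -!sumf_add.
have sid := sumf_id (b - 1).
apply/eqP; rewrite -(@eqn_pmul2l (b - 1)); last lia. apply/eqP.
move: key sid; move: (sumf me (b - 1)) (sumf id (b - 1)) (cc b n) => S I c.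
have -> : b = (b - 2).+2 by lia.
move: (b - 2) => d. rewrite !subSS subn0 /=. nia.
Qed.

Lemma tau_d b r q : 1 < b -> (b - 1) %% 3 != 0 -> q = r %[mod b - 1] -> tau b r q = b - 1.
Proof.
move=> hb h3 e; symmetry; apply: tau_uniq => //; first lia.
by rewrite e addnC modnMDl.
Qed.

Lemma sumf_first F n : 0 < n -> (forall i, 0 < i < n -> F i = 0) -> sumf F n = F 0.
Proof.
move=> hn H; rewrite -(subnKC hn) sumf_split /= sumf_zero; first by lia.
move=> i hi; apply: H; lia.
Qed.

Lemma cnt_a0 b n r : 1 < b -> 1 < n -> (b - 1) %% 3 != 0 -> r < cc b n ->
  sumf (fun q => a0 b r q && ~~ a1 b n r q) ((b - 1) * (2 * (cc b n + 1)))
  = sumf (fun j => nat_of_bool (j <= w b (r + (b - 1) * j))) (cc b n + 1).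
Proof.
move=> hb hn h3 hr; have [c0 cB cD] := facts hb hn.
have hQ : r + (b - 1) * (cc b n + 1) <= (b - 1) * (2 * (cc b n + 1)).
  have h1 := leq_pmull (cc b n) (_ : 0 < b - 1).
  have {}h1 := h1 ltac:(lia). clear -hr h1; lia.
rewrite -(subnKC (leq_trans (leq_addr _ r) hQ)) sumf_split.
rewrite sumf_zero; last by move=> i hi; rewrite /a0; case: (leqP r i) => //; lia.
rewrite add0n -(subnKC (_ : (b - 1) * (cc b n + 1) <= (b - 1) * (2 * (cc b n + 1)) - r)); last by clear -hQ; lia.
rewrite sumf_split [X in _ + X]sumf_zero; last first.
  move=> i _; rewrite /a0 /a1. case: eqP => [e|_]; last by rewrite /= andbF.
  rewrite tau_d //.
  have -> : r + (cc b n + 1) * (b - 1) <= r + ((b - 1) * (cc b n + 1) + i) by rewrite mulnC leq_add2l leq_addr.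
  by rewrite andbF.
rewrite addn0 sumf_block. apply: sumf_ext => j hj.
rewrite sumf_first; last first.
- move=> e he. rewrite /a0.
  have -> : (r + ((b - 1) * j + e)) %% (b - 1) == r %% (b - 1) = false.
    rewrite addnCA mulnC modnMDl eqn_mod_dvd; last by rewrite leq_addr.
    rewrite addKn. apply/negP => /dvdn_leq; lia.
  by rewrite /= andbF.
- lia.
rewrite addn0 /a0 /a1 leq_addr /= tau_d //; last by rewrite mulnC addnC modnMDl.
rewrite (mulnC (cc b n + 1)) leq_add2l leq_pmul2l; last lia.
rewrite leq_add2l leq_pmul2l; last lia.
rewrite mulnC addnC modnMDl eqxx /=.
have -> : cc b n + 1 <= j = false by apply/negP; lia.
by rewrite andbT.
Qed.


Lemma sumf_id2 n : 2 * sumf id n + n = n * n.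
Proof. have := sumf_id n; case: n => [|n] //=; lia. Qed.

Lemma w_bb b : 1 < b -> w b (b * b - 1) = b - 1.
Proof.
move=> hb; rewrite (wE _ hb).
have -> : (b * b - 1) %/ b = b - 1.
  have -> : b * b - 1 = (b - 1) * b + (b - 1) by case: b hb => // b _; rewrite !subn1 /=; nia.
  rewrite divnMDl; last lia. rewrite divn_small; lia.
rewrite w_small; lia.
Qed.

Lemma wdc b n y : 1 < b -> y < b ^ n ->
  w b ((b - 1) * cc b n + y) + 2 = cc b n + w b y.
Proof.
move=> hb hy; have := w_shift (b * b - 1) hb hy.
rewrite w_bb //.
have -> : (b * b - 1) * b ^ n = (b - 1) * cc b n.
  rewrite /cc mulnA; congr (_ * _); case: b hb {hy} => // b _; rewrite !subn1 /=; nia.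
move=> h. apply/eqP; rewrite -(@eqn_pmul2l (b - 1)); last lia. apply/eqP.
move: h; move: (w b ((b - 1) * cc b n + y)) (w b y) (cc b n) => A B c.
have -> : b = (b - 1).+1 by lia.
move: (b - 1) => d. rewrite !subn1 /=. move=> h. nia.
Qed.

Lemma bpow2 b n : 1 < b -> (b - 1) * cc b n + b ^ n = b ^ (n + 2).
Proof.
move=> hb; rewrite /cc expnD. have -> : b ^ 2 = b * b by rewrite expnS expn1.
move: (b ^ n) => P. have -> : b = (b - 1).+1 by lia. move: (b - 1) => d. rewrite !subn1 /=. nia.
Qed.

Lemma w_big b n z : 1 < b -> (b - 1) * cc b n + b ^ n <= z -> cc b n <= w b z.
Proof.
move=> hb hz; have := w_mono hb hz. rewrite bpow2 //.
have := w_pow (n + 2) hb. rewrite -bpow2 //.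
move: (w b ((b - 1) * cc b n + b ^ n)) => W h1 h2.
have p : 0 < b ^ n by rewrite expn_gt0; lia.
have : (b - 1) * cc b n <= (b - 1) * W by clear -h1 hb p; lia.
rewrite leq_pmul2l; last lia. move=> h3; exact: leq_trans h3 h2.
Qed.

Lemma Wform b K : 1 < b ->
  2 * (b - 1) * sumf (w b) (b ^ K) + K * (b - 1) * b ^ K + b ^ K = b ^ K * b ^ K.
Proof.
move=> hb; elim: K => [|K IH]; first by rewrite expn0 /= w0; lia.
rewrite expnS sumf_block.
rewrite (@sumf_ext _ (fun a => b * (a + w b a))); last first.
  move=> a _. rewrite (@sumf_ext _ (fun _ => a + w b a)); first by rewrite sumf_const mulnC.
  move=> e he. rewrite (wE _ hb). have -> : (b * a + e) %/ b = a.
    rewrite mulnC divnMDl; last lia. rewrite divn_small //. by rewrite addn0.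
  done.
rewrite sumf_mull sumf_add.
change (sumf (fun a => w b a) (b ^ K)) with (sumf (w b) (b ^ K)).
have := sumf_id2 (b ^ K).
move: IH; move: (sumf (w b) (b ^ K)) (sumf id (b ^ K)) (b ^ K) => W I P h1 h2.
have hd : b = (b - 1).+1 by lia. move: (b - 1) hd => d hd. subst b. rewrite !subn1 /= in h1 *.
have e1 := congr1 (muln d.+1) h1. have e2 := congr1 (muln d) h2.
clear -e1 e2. nia.
Qed.

Lemma D1 b n : 1 < b -> 1 < n ->
  sumf (fun r => sumf (fun j => nat_of_bool (w b (r + (b - 1) * j) < j)) (cc b n + 1)) (cc b n)
  = sumf (fun q => minn (cc b n) (q %/ (b - 1)) - w b q) ((b - 1) * cc b n + cc b n).
Proof.
move=> hb hn; have [c0 cB cD] := facts hb hn.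
set c := cc b n. set T := (b - 1) * c + c.
rewrite sumf_swap.
rewrite (@sumf_ext _ (fun j => sumf (fun q => if ((b - 1) * j <= q) && (q < (b - 1) * j + c)
     then nat_of_bool (w b q < j) else 0) T)); last first.
  move=> j hj. rewrite -(@sumf_window (fun r => nat_of_bool (w b (r + (b - 1) * j) < j)) ((b - 1) * j) c T).
  - apply sumf_ext => q _. case: ifP => //. move=> /andP [h1 _]. by rewrite subnK.
  - have hj' : j <= c by move: hj; rewrite addn1 ltnS.
    have := leq_mul (leqnn (b - 1)) hj'. rewrite /T. clearbody c. clear -hj'. lia.
rewrite sumf_swap. apply: sumf_ext => q hq.
rewrite -sumf_range -[c.+1]addn1. apply sumf_ext => j hj.
have hq3 : q < b ^ (n + 3).
  apply: leq_trans hq _. apply: leq_trans cB. rewrite /T -(mulb c hb) leq_mul2r /c leq_addr orbT //.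
have wd := w_digits hb hq3.
have key : w b q < j -> (b - 1) * j <= q -> q < (b - 1) * j + c.
  move=> hw _. have := leq_mul (leqnn (b - 1)) hw. rewrite mulnS /c. clear -wd cD hb. lia.
rewrite leq_divRL; last lia. rewrite (mulnC j).
case h1: ((b - 1) * j <= q); case h2: (w b q < j); case h3: (q < (b - 1) * j + c) => //=.
by rewrite key in h3.
Qed.

Lemma sum2w b n : 1 < b -> 1 < n -> sumf (fun y => 2 - w b y) (b ^ n) = 3 * b.
Proof.
move=> hb hn. have h2 : 2 * b <= b ^ n by have := bn_ge hb (ltnW hn); have := leq_mul (leqnn b) hn; lia.
rewrite -(subnKC h2) sumf_split mulSn mul1n sumf_split.
rewrite (@sumf_ext _ (fun _ => 2)); last by move=> i hi; rewrite w_small.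
rewrite (@sumf_ext (fun i => 2 - w b (b + i)) (fun _ => 1)); last first.
  move=> i hi; rewrite (wE _ hb). have -> : (b + i) %/ b = 1.
    rewrite -{1}(mul1n b) divnMDl; last lia. by rewrite divn_small.
  by rewrite w_small.
rewrite !sumf_const sumf_zero; last first.
  move=> i _. have := w_ge_div (b + b + i) hb.
  have : 2 <= (b + b + i) %/ b by rewrite leq_divRL; lia.
  lia.
lia.
Qed.

Lemma D2 b n : 1 < b -> 1 < n ->
  2 * sumf (fun q => minn (cc b n) (q %/ (b - 1)) - w b q) ((b - 1) * cc b n + cc b n)
  + b ^ n * (n + 2) = 6 * b + b ^ n * (b ^ 2 * (n + 1) + b).
Proof.
move=> hb hn; have [c0 cB cD] := facts hb hn.
have ec : cc b n = b ^ n + b * b ^ n by rewrite /cc; lia.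
have -> : (b - 1) * cc b n + cc b n = (b - 1) * cc b n + (b ^ n + b * b ^ n) by rewrite -ec.
rewrite !sumf_split.
rewrite (@sumf_ext _ (fun y => 2 - w b y) (b ^ n)); last first.
  move=> y hy. have := wdc hb hy.
  have -> : minn (cc b n) (((b - 1) * cc b n + y) %/ (b - 1)) = cc b n.
    apply/minn_idPl. rewrite leq_divRL; last lia. rewrite mulnC; exact: leq_addr.
  lia.
rewrite sum2w //.
rewrite (@sumf_zero (fun i => minn (cc b n) (((b - 1) * cc b n + (b ^ n + i)) %/ (b - 1)) -
      w b ((b - 1) * cc b n + (b ^ n + i))) (b * b ^ n)); last first.
  move=> y _.
  have hh : (b - 1) * cc b n + b ^ n <= (b - 1) * cc b n + (b ^ n + y) by rewrite addnA leq_addr.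
  have := @w_big b n ((b - 1) * cc b n + (b ^ n + y)) hb hh.
  have := geq_minl (cc b n) (((b - 1) * cc b n + (b ^ n + y)) %/ (b - 1)). lia.
rewrite (@sumf_ext _ (fun q => q %/ (b - 1) - w b q)); last first.
  move=> q hq. congr (_ - _). apply/minn_idPr. apply: ltnW. rewrite ltn_divLR; last lia. by rewrite mulnC.
have eA := @sumf_sub (fun q => q %/ (b - 1)) (w b) ((b - 1) * cc b n).
have {}eA := eA (fun q _ => ltac:(rewrite leq_divRL; [rewrite mulnC; exact: w_le|lia])).
have eI : sumf (fun q => q %/ (b - 1)) ((b - 1) * cc b n) = (b - 1) * sumf id (cc b n).
  rewrite sumf_block -sumf_mull. apply: sumf_ext => a _.
  rewrite (@sumf_ext _ (fun _ => a)); first by rewrite sumf_const mulnC.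
  move=> e he. rewrite mulnC divnMDl; last lia. by rewrite divn_small // addn0.
have e3 := sumf_split (w b) ((b - 1) * cc b n) (b ^ n). rewrite bpow2 // in e3.
have e4 : sumf (fun y => w b ((b - 1) * cc b n + y) + 2) (b ^ n) = sumf (fun y => cc b n + w b y) (b ^ n).
  apply sumf_ext => y hy. exact: wdc.
rewrite !sumf_add !sumf_const in e4.
change (sumf (fun y => w b y) (b ^ n)) with (sumf (w b) (b ^ n)) in e4.
have e5 := Wform n hb. have e6 := Wform (n + 2) hb.
have e2 := sumf_id2 (cc b n).
rewrite eI in eA. clear eI.
move: (sumf (fun q => q %/ (b - 1) - w b q) ((b - 1) * cc b n)) eA => A eA.
move: (sumf (w b) ((b - 1) * cc b n)) eA e3 => Sw eA e3.
move: (sumf (fun i => w b ((b - 1) * cc b n + i)) (b ^ n)) e3 e4 => S2 e3 e4.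
move: (sumf (w b) (b ^ (n + 2))) e3 e6 => W2 e3 e6.
move: (sumf (w b) (b ^ n)) e4 e5 => W1 e4 e5.
move: (sumf id (cc b n)) eA e2 => I eA e2.
have eP2 : b ^ (n + 2) = b ^ n * (b * b) by rewrite expnD expnS expn1.
have eb2 : b ^ 2 = b * b by rewrite expnS expn1.
rewrite eP2 in e6. rewrite eb2. rewrite /cc in eA e4 e2.
clear ec cB cD c0 eP2 eb2.
move: (b ^ n) eA e2 e4 e5 e6 => P eA e2 e4 e5 e6.
have hd : b = (b - 1).+1 by lia. move: (b - 1) hd eA e2 e4 e5 e6 => d hd eA e2 e4 e5 e6. subst b.
apply/eqP; rewrite -(@eqn_pmul2l d); last lia. apply/eqP.
have m1 := congr1 (muln (2 * d)) eA. have m2 := congr1 (muln (d * d)) e2.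
have m3 := congr1 (muln (2 * d)) e3. have m4 := congr1 (muln (2 * d)) e4.
clear -m1 m2 m3 m4 e5 e6. lia.
Qed.

Unset Implicit Arguments.

Theorem mainTheorem14 (b n : nat) (hb : 2 <= b) (hb3 : b %% 3 != 1)
    (hn : 2 <= n) :
  exists g : nat, has_genus (Tb' b n) g /\
    2 * g = 6 * b + (b ^ (2 * n) * ((b ^ 3 + b ^ 2) - (b + 1))
                     + b ^ n * (b ^ 2 * (n + 1) - (n + 3))).
Proof.
have h3 : (b - 1) %% 3 != 0.
  apply: contra hb3 => /eqP h. apply/eqP.
  have -> : b = (b - 1) + 1 by lia. by rewrite -modnDml h.
have [c0 cB cD] := facts hb hn.
set c := cc b n.
set Qm := (b - 1) * (2 * (c + 1)).
pose gapf := fun x => ~~ (a0 b (x %% c) (x %/ c) || a1 b n (x %% c) (x %/ c)).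
have memc : forall x, Tb' b n x <-> ~~ gapf x.
  move=> x. rewrite /gapf negbK. rewrite {1}(divn_eq x c) addnC mulnC.
  apply: mem_char => //. rewrite ltn_pmod //.
have gapB : forall x, gapf x -> x < c * Qm.
  move=> x; rewrite /gapf. apply: contraTT; rewrite -leqNgt => hx.
  rewrite negbK; apply/orP; right. rewrite /a1.
  have hq : Qm <= x %/ c by rewrite leq_divRL // mulnC.
  have := tau_bounds (x %% c) (x %/ c) hb. case/andP => _ ht.
  have := ltn_pmod x c0. 
  have := leq_mul (leqnn (c + 1)) ht.
  have : c <= (b - 1) * (c + 1) by have := leq_pmull (c + 1) (_ : 0 < b - 1); lia.
  rewrite /Qm in hq. lia.
exists (sumf gapf (c * Qm)); split.
  exists (filter gapf (iota 0 (c * Qm))); split; [|split].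
  - by rewrite filter_uniq // iota_uniq.
  - move=> x; rewrite mem_filter mem_iota add0n memc; split.
    + by case/andP => ->.
    + move/negP; rewrite negbK => g; rewrite g (gapB _ g) //.
  - rewrite size_filter; exact: count_iota.
rewrite sumf_block sumf_swap.
rewrite (@sumf_ext _ (fun e => sumf (fun q => nat_of_bool (~~ (a0 b e q || a1 b n e q))) Qm)); last first.
  move=> e he; apply: sumf_ext => q _. rewrite /gapf.
  have -> : (c * q + e) %% c = e by rewrite mulnC modnMDl modn_small.
  have -> : (c * q + e) %/ c = q by rewrite mulnC divnMDl // divn_small // addn0.
  done.
set E := fun e => sumf (fun j => nat_of_bool (j <= w b (e + (b - 1) * j))) (c + 1).
set Dd := fun e => sumf (fun j => nat_of_bool (w b (e + (b - 1) * j) < j)) (c + 1).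
set N := fun e => sumf (fun q => nat_of_bool (~~ (a0 b e q || a1 b n e q))) Qm.
have hN : sumf (fun e => 2 * N e + 2 * E e) c = sumf (fun e => 2 * e + (c * b + 2)) c.
  apply: sumf_ext => e he.
  rewrite addnA -(cnt_a1 hb hn h3 he) -/c -/Qm /E -(cnt_a0 hb hn h3 he) -/c -/Qm /N -mulnDr -sumf_add.
  congr (2 * _); apply: sumf_ext => q _. by case: (a0 b e q); case: (a1 b n e q).
have hE : sumf (fun e => E e + Dd e) c = sumf (fun _ => c + 1) c.
  apply: sumf_ext => e he. rewrite /E /Dd -sumf_add -[X in _ = X]mul1n -sumf_const.
  apply sumf_ext => j _. by case: leqP.
have hD := D2 hb hn. rewrite -D1 // -/c in hD.
rewrite !sumf_add !sumf_mull !sumf_const in hN hE.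
change (sumf (fun e => e) c) with (sumf id c) in hN.
have hI := sumf_id2 c.
change (sumf (fun r => sumf (fun j => nat_of_bool (w b (r + (b - 1) * j) < j)) (c + 1)) c) with (sumf Dd c) in hD.
move: (sumf N c) (sumf E c) (sumf Dd c) (sumf id c) hN hE hD hI => SN SE SD SI hN hE hD hI.
rewrite /c /cc in hN hE hI.
have e2n : b ^ (2 * n) = b ^ n * b ^ n by rewrite mul2n -addnn expnD.
have e3 : b ^ 3 = b * b * b by rewrite !expnS expn0 muln1 mulnA.
have e2 : b ^ 2 = b * b by rewrite expnS expn1.
rewrite e2n e3 e2 in hD *. rewrite !mulnBr.
move: (b ^ n) hN hE hD hI => P hN hE hD hI.
have bb : 4 <= b * b by have := leq_mul hb hb; lia.
have b2 : 2 * b <= b * b by exact: leq_mul hb (leqnn b).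
have f1 : P * P * (b + 1) <= P * P * (b * b * b + b * b).
  apply: leq_mul => //. have : b * b <= b * b * b by rewrite leq_pmulr; lia. lia.
have f2 : P * (n + 3) <= P * (b * b * (n + 1)).
  apply: leq_mul => //. have := leq_mul bb (leqnn (n + 1)). lia.
clear -hN hE hD hI hb hn f1 f2. lia.
Qed.
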